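(* For every $r\in\mathbb{N}$, $0\le l\le r-1$ and $z\in\mathbb{C}$, $\lim_{q\uparrow1}P^l_{q,r}(z)=P^l_r(z)$.
   Context: $0<q<1$, $[w]_q:=(1-q^w)/(1-q)$, $[n]_q!:=[n]_q\cdots[1]_q$. For $0\le l\le r-2$, $P^l_{q,r}(z):=\frac{(-1)^{r-1-l}}{[r-1]_q!}\sum_{1\le m_1<\cdots<m_{r-1-l}\le r-1}q^{m_1+\cdots+m_{r-1-l}}[z-m_1]_q\cdots[z-m_{r-1-l}]_q$, and $P^{r-1}_{q,r}(z):=1/[r-1]_q!$. The Stirling numbers of the first kind $s(l,j)$ are defined by $x(x+1)\cdots(x+l-1)=\sum_{j=0}^l s(l,j)x^j$, and $P^l_r(z):=\frac{1}{(r-1)!}\sum_{j=l}^{r-1}\binom{j}{l}s(r,j+1)(-z)^{j-l}$. *)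

(* Defs.v *)
From HB Require Import structures.
From mathcomp Require Import all_boot all_order all_algebra.
From mathcomp Require Import all_classical all_reals all_analysis.
From mathcomp Require Import complex.
Set Implicit Arguments. Unset Strict Implicit. Unset Printing Implicit Defensive.
Import Order.TTheory GRing.Theory Num.Theory.
Import numFieldTopology.Exports numFieldNormedType.Exports.

HB.instance Definition _ (R : rcfType) :=
  PseudoPointedMetric.copy R[i] (R[i] : numClosedFieldType)^o.
Local Open Scope classical_set_scope.
Local Open Scope ring_scope.

Definition realC (R : realType) (x : R) : R[i] := Complex x 0.

(* q^w for real q > 0 and complex w : exp(w ln q), written via
   exp(a + i b) = e^a (cos b + i sin b). *)
Definition cpow (R : realType) (q : R) (w : R[i]) : R[i] :=
  Complex (expR (complex.Re w * ln q) * cos (complex.Im w * ln q))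
          (expR (complex.Re w * ln q) * sin (complex.Im w * ln q)).

Definition qnum (R : realType) (q : R) (w : R[i]) : R[i] :=
  (1 - cpow q w) / realC (1 - q).

Definition qfact (R : realType) (q : R) (n : nat) : R[i] :=
  \prod_(1 <= k < n.+1) qnum q k%:R.

(* P^l_{q,r}(z): for l = r-1 it is 1/[r-1]_q!; for 0 <= l <= r-2 it is
   (-1)^{r-1-l}/[r-1]_q! * sum over 1 <= m_1 < ... < m_{r-1-l} <= r-1 of
   prod_k q^{m_k} [z - m_k]_q.  The increasing tuples (m_k) are encoded as
   subsets A of 'I_(r-1) of cardinality r-1-l, with m = i.+1 for i in A. *)
Definition Pq (R : realType) (q : R) (r l : nat) (z : R[i]) : R[i] :=
  if l == r.-1 then (qfact q r.-1)^-1
  else (-1) ^+ (r.-1 - l) / qfact q r.-1 *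
       \sum_(A : {set 'I_r.-1} | #|A| == (r.-1 - l)%N)
          \prod_(i in A) (realC (q ^+ i.+1) * qnum q (z - (i.+1)%:R)).

Definition stirling1 (l j : nat) : nat :=
  ((\prod_(i < l) ('X + (i : nat)%:P) : {poly nat})`_j)%R.

Definition Pr (R : realType) (r l : nat) (z : R[i]) : R[i] :=
  ((r.-1)`!%:R)^-1 *
  \sum_(l <= j < r) ('C(j, l)%:R * (stirling1 r j.+1)%:R * (- z) ^+ (j - l)).

(* Main.v *)
Require Import Defs.
From HB Require Import structures.
From mathcomp Require Import all_boot all_order all_algebra.
From mathcomp Require Import all_classical all_reals all_analysis.
From mathcomp Require Import complex.
From mathcomp Require Import ring lra.
Import Order.TTheory GRing.Theory Num.Theory.
Import numFieldTopology.Exports numFieldNormedType.Exports.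
Local Open Scope classical_set_scope.
Local Open Scope ring_scope.

Section A.
Variable R : realType.
Local Notation C := (R[i]).

Lemma vieta n l (c : nat -> C) : (l <= n)%N ->
  (\prod_(i < n) ('X - (c i)%:P))`_l =
  (-1) ^+ (n - l) * \sum_(A : {set 'I_n} | #|A| == (n - l)%N) \prod_(i in A) c i.
Proof.
move=> ln.
have := @coef_prod_XsubC _ (mkseq c n) l.
rewrite size_mkseq => /(_ ln) E.
have E2 : \prod_(p <- mkseq c n) ('X - p%:P) = \prod_(i < n) ('X - (c i)%:P).
  by rewrite -(big_mkord xpredT (fun k => 'X - (c k)%:P)) /index_iota subn0 /mkseq big_map.
rewrite E2 in E.
rewrite E; congr (_ * _); apply: eq_bigr => A _; apply: eq_bigr => i _.
by rewrite nth_mkseq.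
Qed.

Lemma XaddC_exp_coef (c : C) j l :
  (('X + c%:P) ^+ j)`_l = 'C(j, l)%:R * c ^+ (j - l).
Proof.
elim: j l => [|j IH] l.
  by rewrite expr0 coef1; case: l => [|k] /=; rewrite ?expr0 ?mulr1 ?mul0r.
rewrite (exprSr ('X + c%:P)) mulrDr coefD coefMX coefMC.
case: l => [|k].
  by rewrite /= add0r IH !bin0 !subn0 -mulrA -exprSr.
rewrite /= !IH binS natrD subSS mulrDl addrC; congr (_ + _).
rewrite -mulrA; case: (ltnP k j) => kj.
  by rewrite -exprSr subnSK.
by rewrite bin_small ?ltnS // !mul0r.
Qed.

Lemma coef_comp_XaddC (p : {poly C}) (c : C) l :
  (p \Po ('X + c%:P))`_l = \sum_(j < size p) p`_j * ('C(j, l)%:R * c ^+ (j - l)).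
Proof.
rewrite coef_comp_poly; apply: eq_bigr => j _; by rewrite XaddC_exp_coef.
Qed.


Lemma stirling_coef n j : ((stirling1 n.+1 j.+1)%:R : C) =
  (\prod_(i < n) ('X - (- (i.+1)%:R)%:P) : {poly C})`_j.
Proof.
rewrite /stirling1 big_ord_recl /= addr0 coefXM /=.
rewrite -(coef_map_id0 (f := GRing.natmul (1:C))) //.
rewrite rmorph_prod.
apply: (congr1 (fun p : {poly C} => p`_j)).
under eq_bigr => i _ do rewrite rmorphD /= map_polyX map_polyC /= /bump leq0n add1n.
by apply: eq_bigr => i _; rewrite polyCN opprK.
Qed.


Definition Llim (r l : nat) (z : R[i]) : R[i] :=
  (-1) ^+ (r.-1 - l) / (r.-1)`!%:R *
  \sum_(A : {set 'I_r.-1} | #|A| == (r.-1 - l)%N) \prod_(i in A) (z - (i.+1)%:R).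

Lemma Pr_eq r l z : (l < r)%N -> Pr r l z = Llim r l z.
Proof.
case: r => [//|n] /= ln.
rewrite /Pr /Llim /=.
set p0 : {poly C} := \prod_(i < n) ('X - (- (i.+1)%:R)%:P).
have V := vieta n l (fun i => z - (i.+1)%:R) ln.
have Hc : \prod_(i < n) ('X - ((fun i => z - (i.+1)%:R) i)%:P) = p0 \Po ('X + (-z)%:P).
  have c1 : 1 \Po ('X + (-z)%:P) = 1 by rewrite -polyC1 comp_polyC.
  rewrite /p0 (big_morph (fun p => p \Po ('X + (-z)%:P)) (fun p q => comp_polyM p q _) c1).
  apply: eq_bigr => i _.
  rewrite comp_polyB comp_polyX comp_polyC !polyCN polyCB.
  by rewrite opprK opprB addrA addrAC.
rewrite Hc coef_comp_XaddC in V.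
have Hs : size p0 = n.+1.
  by rewrite /p0 size_prod_XsubC /index_enum -enumT -cardT card_ord.
rewrite Hs in V.
rewrite mulrAC -V mulrC; congr (_ * _).
rewrite -(big_mkord xpredT (fun j => p0`_j * ('C(j, l)%:R * (- z) ^+ (j - l)))).
rewrite [RHS](@big_cat_nat _ _ _ l) //=; last by rewrite ltnW.
rewrite [in RHS]big_nat_cond [in RHS]big1 ?add0r; last first.
  by move=> j /andP[/andP[_ jl] _]; rewrite bin_small // !mul0r mulr0.
apply: eq_bigr => j _.
by rewrite stirling_coef -/p0 [_ * p0`_j]mulrC mulrA.
Qed.

End A.

Section S.
Variable R : realType.

Lemma cvg_RC T (F : set_system T) (FF : Filter F) (f g : T -> R) (a b : R) :
  f @ F --> a -> g @ F --> b ->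
  (fun x => ((f x +i* g x)%C : R[i]^o)) @ F --> ((a +i* b)%C : R[i]^o).
Proof.
move=> /cvgrPdist_lt Hf /cvgrPdist_lt Hg.
apply/cvgrPdist_lt => e e0.
case: e e0 => er ei; rewrite ltcE => /andP[/eqP /= -> er0].
have er2 : 0 < er / 2 by rewrite divr_gt0.
move: (Hf _ er2) (Hg _ er2) => Hf2 Hg2.
near=> x.
have h1 : `|a - f x| < er / 2 by near: x.
have h2 : `|b - g x| < er / 2 by near: x.
rewrite normc_def /= ltcR.
rewrite -(@ger0_norm _ er) ?ltW // -sqrtr_sqr ltr_sqrt ?exprn_gt0 //.
move: h1 h2; rewrite !ltr_norml => /andP[h1 h1'] /andP[h2 h2'].
rewrite !expr2; nra.
Unshelve. all: by end_near.
Qed.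


Lemma dq_left (f : R -> R) (d : R) : is_derive (1:R) 1 f d ->
  (fun q => (f q - f 1) / (q - 1)) @ (1:R)^'- --> d.
Proof.
case=> Hd Hv.
have HG : (fun h : R => h^-1 *: ((f \o shift 1) (h *: 1) - f 1)) @ 0^' --> d.
  by rewrite -Hv; exact: Hd.
apply: cvg_trans HG => P HP.
have HP' : \forall h \near (0:R), h != 0 -> P (h^-1 *: ((f \o shift 1) (h *: 1) - f 1)) := HP.
change (\forall q \near (1:R), q < 1 -> P ((f q - f 1) / (q - 1))).
apply/nbhs0P.
apply: filterS HP' => e He lt1.
have e0 : e != 0 by apply/negP => /eqP e0; move: lt1; rewrite e0 addr0 ltxx.
move: (He e0); congr P.
rewrite /= [1 + e]addrC addrK mulrC.
have -> : e%:A = e :> R by rewrite /GRing.scale /= mulr1.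
by [].
Qed.


Lemma is_derive_lin (c : R) : is_derive (1:R) 1 (fun q => c * ln q) c.
Proof.
have dl : is_derive (1:R) 1 (@ln R) 1 by apply: is_derive_eq; [apply: is_derive1_ln; exact: ltr01 | exact: invr1].
have := is_deriveZ c dl.
by rewrite /GRing.scale /= mulr1.
Qed.


Lemma is_derive_fre (a b : R) :
  is_derive (1:R) 1 (fun q => expR (a * ln q) * cos (b * ln q)) a.
Proof.
have d1 := is_derive1_comp (is_derive_expR _) (is_derive_lin a).
have d2 := is_derive1_comp (is_derive_cos _) (is_derive_lin b).
have := is_deriveM d1 d2.
move=> H; apply: is_derive_eq H _.
rewrite /= ln1 !mulr0 expR0 cos0 sin0 /GRing.scale /=.
lra.
Qed.

Lemma is_derive_fim (a b : R) :
  is_derive (1:R) 1 (fun q => expR (a * ln q) * sin (b * ln q)) b.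
Proof.
have d1 := is_derive1_comp (is_derive_expR _) (is_derive_lin a).
have d2 := is_derive1_comp (is_derive_sin _) (is_derive_lin b).
have := is_deriveM d1 d2.
move=> H; apply: is_derive_eq H _.
rewrite /= ln1 !mulr0 expR0 cos0 sin0 /GRing.scale /=.
lra.
Qed.


Lemma qnum_cvg (w : R[i]) :
  (fun q => (qnum q w : R[i]^o)) @ (1:R)^'- --> (w : R[i]^o).
Proof.
case: w => a b.
set f := fun q : R => expR (a * ln q) * cos (b * ln q).
set g := fun q : R => expR (a * ln q) * sin (b * ln q).
have E : {near (1:R)^'-, (fun q => (((f q - f 1)/(q-1)) +i* ((g q - g 1)/(q-1)))%C : R[i]^o)
           =1 (fun q => qnum q (a +i* b)%C)}.
  rewrite near_withinE; apply: nearW => q /= q1.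
  have q1' : q - 1 != 0 by rewrite subr_eq0 lt_eqF.
  have q1'' : 1 - q != 0 by rewrite subr_eq0 gt_eqF.
  rewrite /qnum /cpow /realC /f /g /= ln1 !mulr0 expR0 cos0 sin0 mulr1 mulr0.
  rewrite -[((1 - q) +i* 0)%C]/((1 - q)%:C)%C -fmorphV /=.
  simpc.
  have q1''' : q != 1 by rewrite lt_eqF.
  by congr (Complex _ _); field; rewrite q1'' q1'.
apply: cvg_trans (near_eq_cvg E) _.
apply: cvg_RC; exact: dq_left (is_derive_fre _ _) || exact: dq_left (is_derive_fim _ _).
Qed.


End S.

Lemma cvg_bigprod (K : numFieldType) (I T : Type) (F : set_system T) {FF : Filter F}
  (s : seq I) (P : pred I) (Fn : I -> T -> K^o) (L : I -> K^o) :
  (forall i, P i -> Fn i @ F --> L i) ->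
  (fun x => \prod_(i <- s | P i) Fn i x) @ F --> \prod_(i <- s | P i) L i.
Proof.
move=> H; elim: s => [|a s IH].
  have -> : (fun x => \prod_(i <- [::] | P i) Fn i x) = fun=> 1.
    by apply: funext => x; rewrite big_nil.
  rewrite big_nil; exact: cvg_cst.
have -> : (fun x => \prod_(i <- a :: s | P i) Fn i x) =
   fun x => (if P a then Fn a x else 1) * \prod_(i <- s | P i) Fn i x.
  by apply: funext => x; rewrite big_cons; case: (P a); rewrite ?mul1r.
rewrite big_cons.
case Pa: (P a).
  exact: (@cvgM K T F FF (Fn a) (fun x => \prod_(i <- s | P i) Fn i x) _ _ (H a Pa) IH).
have -> : (fun x => 1 * \prod_(i <- s | P i) Fn i x) = (fun x => \prod_(i <- s | P i) Fn i x).
  by apply: funext => x; rewrite mul1r.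
exact: IH.
Qed.

Lemma cvg_bigsum (K : numFieldType) (I T : Type) (F : set_system T) {FF : Filter F}
  (s : seq I) (P : pred I) (Fn : I -> T -> K^o) (L : I -> K^o) :
  (forall i, P i -> Fn i @ F --> L i) ->
  (fun x => \sum_(i <- s | P i) Fn i x) @ F --> \sum_(i <- s | P i) L i.
Proof.
move=> H; elim: s => [|a s IH].
  have -> : (fun x => \sum_(i <- [::] | P i) Fn i x) = fun=> 0.
    by apply: funext => x; rewrite big_nil.
  rewrite big_nil; exact: cvg_cst.
have -> : (fun x => \sum_(i <- a :: s | P i) Fn i x) =
   fun x => (if P a then Fn a x else 0) + \sum_(i <- s | P i) Fn i x.
  by apply: funext => x; rewrite big_cons; case: (P a); rewrite ?add0r.
rewrite big_cons.
case Pa: (P a).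
  exact: (@cvgD K _ T F FF (Fn a) (fun x => \sum_(i <- s | P i) Fn i x) _ _ (H a Pa) IH).
have -> : (fun x => 0 + \sum_(i <- s | P i) Fn i x) = (fun x => \sum_(i <- s | P i) Fn i x).
  by apply: funext => x; rewrite add0r.
exact: IH.
Qed.


Section T.
Variable R : realType.

Lemma qfact_cvg n : (fun q => (qfact q n : R[i]^o)) @ (1:R)^'- --> ((n`!)%:R : R[i]^o).
Proof.
rewrite fact_prod natr_prod /qfact.
by apply: cvg_bigprod => k _; exact: qnum_cvg.
Qed.

Lemma pow_cvg k : (fun q : R => q ^+ k) @ (1:R)^'- --> (1:R).
Proof.
have hid : (fun q:R => q) @ (1:R)^'- --> (1:R) by apply: cvg_at_left_filter; exact: cvg_id.
have H := cvg_bigprod R nat R ((1:R)^'-) (index_iota 0 k) (fun=> true) (fun _ q => q) (fun=> 1) (fun i _ => hid).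
rewrite prodr_const_nat expr1n in H.
have E : (fun q : R => \prod_(0 <= i < k) q) = (fun q : R => q ^+ k).
  by apply: funext => q; rewrite prodr_const_nat subn0.
by rewrite -E; apply: H; exact: at_left_proper_filter.
Qed.

Lemma realC_pow_cvg k : (fun q => (realC (q ^+ k) : R[i]^o)) @ (1:R)^'- --> (1 : R[i]^o).
Proof.
apply: (@cvg_RC R _ _ _ (fun q => q ^+ k) (fun=> 0) 1 0); [exact: pow_cvg | exact: cvg_cst].
Qed.


Lemma Pq_cvg r l z : (l < r)%N ->
  (fun q => (Pq q r l z : R[i]^o)) @ (1:R)^'- --> (Llim R r l z : R[i]^o).
Proof.
move=> lr.
have FF : Filter ((1:R)^'-) := at_left_proper_filter 1.
have nz : ((r.-1)`!%:R : R[i]^o) != 0 by rewrite pnatr_eq0 -lt0n fact_gt0.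
have Hinv := cvgV (FF:=FF) nz (qfact_cvg r.-1).
rewrite /Pq /Llim.
case: eqP => [->|nl].
  rewrite subnn expr0 mul1r.
  have -> : \sum_(A : {set 'I_r.-1} | #|A| == 0%N) \prod_(i in A) (z - (i.+1)%:R) = 1.
    under eq_bigl => A do rewrite cards_eq0.
    by rewrite big_pred1_eq big_set0.
  by rewrite mulr1; exact: Hinv.
have Hs : (fun q => \sum_(A : {set 'I_r.-1} | #|A| == (r.-1 - l)%N)
     \prod_(i in A) (realC (q ^+ i.+1) * qnum q (z - (i.+1)%:R)) : R[i]^o) @ (1:R)^'- -->
   (\sum_(A : {set 'I_r.-1} | #|A| == (r.-1 - l)%N) \prod_(i in A) (z - (i.+1)%:R) : R[i]^o).
  apply: cvg_bigsum => A _; apply: cvg_bigprod => i _.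
  rewrite -[X in _ --> X]mul1r.
  exact: (cvgM (FF:=FF) (realC_pow_cvg i.+1) (qnum_cvg R (z - (i.+1)%:R))).
have Hc : (fun q : R => ((-1) ^+ (r.-1 - l) : R[i]^o)) @ (1:R)^'- --> ((-1) ^+ (r.-1 - l) : R[i]^o).
  exact: cvg_cst.
exact: (cvgM (FF:=FF) (cvgM (FF:=FF) Hc Hinv) Hs).
Qed.

End T.

Theorem lemma3p3 (R : realType) (r l : nat) (z : R[i]) :
  (l < r)%N ->
  (fun q : R => Pq q r l z) @ (1 : R)^'- --> Pr r l z.
Proof.
move=> lr.
rewrite (@Pr_eq R r l z lr).
exact: (@Pq_cvg R r l z lr).
Qed.
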